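(* Let $(W,S)$ be a finitely generated Coxeter system, $u\le v$ in $W$, $I=S(u)$, $J=S(v)$. Define $G_v:\mathcal P_I(J)\to[u,v]$ by $G_v(K)=v_K$ and $F:[u,v]\to\mathcal P_I(J)$ by $F(w)=S(w)$ (these are well defined). Then: (a) $G_v\circ F=\mathrm{id}_{[u,v]}$ and $F(G_v(K))\subseteq K$ for all $K\in\mathcal P_I(J)$. (b) $F:([u,v],\le)\to(\mathcal P_I(J),\subseteq)$ is injective and order preserving, and $F(w\vee g)=F(w)\cup F(g)$ for all $w,g\in[u,v]$. (c) $G_v:(\mathcal P_I(J),\subseteq)\to([u,v],\le)$ is surjective and order preserving, and $G_v(K\cap L)=G_v(K)\wedge G_v(L)$ for all $K,L\in\mathcal P_I(J)$. (d) For every $w\in[u,v]$, the fibre $G_v^{-1}(w)$ is closed under $\cup$ and $\cap$ (a sublattice of $\mathcal P_I(J)$), with $\min G_v^{-1}(w)=S(w)$ and $\max G_v^{-1}(w)=J\setminus\mathrm{Des}(v^{S(w)})$, both belonging to $\mathcal P_I(J)$.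
   Context: $(W,S)$ is a finitely generated Coxeter system with length function $\ell$. For $w\in W$, $S(w)\subseteq S$ is the set of simple reflections appearing in a (any) reduced expression of $w$, and $\mathrm{Des}(w)=\{s\in S:\ell(ws)<\ell(w)\}$. For $I\subseteq S$, $W_I$ is the parabolic subgroup generated by $I$, $X_I=\{u\in W:\ell(us)>\ell(u)\ \forall s\in I\}$, and every $w\in W$ factors uniquely as $w=w^Iw_I$ with $w^I\in X_I$, $w_I\in W_I$ (parabolic components along $I$). The partial order on $W$: $u\le v$ iff $v_{S(u)}=u$; the interval $[u,v]$ is a lattice with join $\vee$ and meet $\wedge$. For $I\subseteq J\subseteq S$, $\mathcal P_I(J)=\{K\subseteq S: I\subseteq K\subseteq J\}$ ordered by inclusion. *)

(* Defs.v *)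
From HB Require Import structures.
From mathcomp Require Import all_boot.
From mathcomp Require Import boolp.

Set Implicit Arguments.
Unset Strict Implicit.
Unset Printing Implicit Defensive.

Local Open Scope group_scope.

(* A Coxeter matrix on the finite set S: m s t = None encodes m(s,t) = oo. *)
Definition coxeter_matrix (S : finType) (m : S -> S -> option nat) : Prop :=
  forall s t, (m s t = Some 1%N <-> s = t) /\ m s t = m t s /\ m s t <> Some 0%N.

Definition coxeter_rels (S : finType) (H : groupType) (f : S -> H)
    (m : S -> S -> option nat) : Prop :=
  forall s t n, m s t = Some n -> (f s * f t) ^+ n = 1.

Section Coxeter.
Variables (W : groupType) (S : finType) (r : S -> W).

Definition wprod (ws : seq S) : W := foldr (fun s x => r s * x) 1 ws.

(* (W, r(S)) is a Coxeter system: W has the Coxeter presentation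
   < S | (st)^m(s,t) = 1 > for some Coxeter matrix m, i.e. r(S) generates W,
   the relations hold in W, and every assignment S -> H into a group satisfying
   the relations extends to a group homomorphism W -> H. S is a finType, so
   the system is finitely generated. *)
Definition coxeter_system : Prop :=
  exists m : S -> S -> option nat,
    [/\ coxeter_matrix m, coxeter_rels r m,
        (forall w : W, exists ws : seq S, wprod ws = w) &
        (forall (H : groupType) (f : S -> H), coxeter_rels f m ->
           exists phi : W -> H,
             (forall x y, phi (x * y) = phi x * phi y) /\
             (forall s, phi (r s) = f s))].

Definition has_word_of_size (w : W) : pred nat :=
  fun n => `[< exists ws : seq S, size ws = n /\ wprod ws = w >].

Definition clen (w : W) : nat :=
  match pselect (exists n, has_word_of_size w n) with
  | left h => ex_minn h
  | right _ => 0%N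
  end.

Definition reduced (ws : seq S) : Prop := size ws = clen (wprod ws).

Definition supp (w : W) : {set S} :=
  [set s | `[< exists ws, [/\ reduced ws, wprod ws = w & s \in ws] >]].

Definition Des (w : W) : {set S} := [set s | (clen (w * r s) < clen w)%N].

Definition in_parabolic (K : {set S}) (w : W) : Prop :=
  exists ws : seq S, all (fun s => s \in K) ws /\ wprod ws = w.

(* membership in X_K (minimal left coset representatives) *)
Definition in_X (K : {set S}) (x : W) : Prop :=
  forall s, s \in K -> (clen x < clen (x * r s))%N.

(* parabolic components w = w^K w_K, w^K in X_K, w_K in W_K *)
Definition pright (K : {set S}) (w : W) : W :=
  match pselect (exists y, in_parabolic K y /\ in_X K (w * y^-1)) with
  | left h => projT1 (cid h)
  | right _ => 1
  end.

Definition pleft (K : {set S}) (w : W) : W := w * (pright K w)^-1.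

Definition cle (x y : W) : Prop := pright (supp x) y = x.

Definition in_interval (u v w : W) : Prop := cle u w /\ cle w v.

Definition is_join (u v w g x : W) : Prop :=
  [/\ in_interval u v x, cle w x, cle g x &
      forall y, in_interval u v y -> cle w y -> cle g y -> cle x y].

Definition is_meet (u v w g x : W) : Prop :=
  [/\ in_interval u v x, cle x w, cle x g &
      forall y, in_interval u v y -> cle y w -> cle y g -> cle y x].

End Coxeter.

Definition in_PIJ (S : finType) (I J K : {set S}) : bool :=
  (I \subset K) && (K \subset J).

(* Main.v *)
Require Import Defs.
From HB Require Import structures.
From mathcomp Require Import all_boot.
From mathcomp Require Import boolp.
From mathcomp Require Import all_algebra all_field.
From mathcomp Require Import ring zify.

Set Implicit Arguments.
Unset Strict Implicit.
Unset Printing Implicit Defensive.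


Local Open Scope group_scope.

Definition del (T : Type) (i : nat) (s : seq T) := take i s ++ drop i.+1 s.

Lemma size_del (T : Type) i (s : seq T) : (i < size s)%N -> size (del i s) = (size s).-1.
Proof.
move=> hi; rewrite /del size_cat size_take size_drop hi.
by case: (size s) hi => // n hi; rewrite subSS subnKC.
Qed.

Lemma subseq_del (T : eqType) i (s : seq T) : subseq (del i s) s.
Proof.
rewrite /del -{3}(cat_take_drop i s) cat_subseq //.
by rewrite -[i.+1]/(1 + i)%N -drop_drop drop_subseq.
Qed.

Definition par := bool.
HB.instance Definition _ := Choice.on par.
HB.instance Definition _ := isGroup.Build par addbA addFb addbF addbb addbb.

Section Cocyc.
Variable W : groupType.
Record HT := MkHT { hw : W; hf : W -> bool }.
HB.instance Definition _ := gen_eqMixin HT.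
HB.instance Definition _ := gen_choiceMixin HT.

Definition htmul (x y : HT) := MkHT (hw x * hw y) (fun t => hf x t (+) hf y (t ^ hw x)).
Definition htone := MkHT 1 (fun _ => false).
Definition htinv (x : HT) := MkHT (hw x)^-1 (fun t => hf x (t ^ (hw x)^-1)).

Lemma htmulA : associative htmul.
Proof.
move=> [a f] [b g] [c h]; rewrite /htmul /=; congr MkHT; first by rewrite mulgA.
by apply: funext => t; rewrite conjgM addbA.
Qed.
Lemma htmul1 : left_id htone htmul.
Proof. by move=> [a f]; rewrite /htmul /=; congr MkHT; [rewrite mul1g|apply: funext=> t; rewrite conjg1]. Qed.
Lemma htmulg1 : right_id htone htmul.
Proof. by move=> [a f]; rewrite /htmul /=; congr MkHT; [rewrite mulg1|apply: funext=> t; rewrite addbF]. Qed.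
Lemma htmulV : left_inverse htone htinv htmul.
Proof. by move=> [a f]; rewrite /htmul /=; congr MkHT; [rewrite mulVg|apply: funext=> t; rewrite addbb]. Qed.
Lemma htmulgV : right_inverse htone htinv htmul.
Proof. by move=> [a f]; rewrite /htmul /=; congr MkHT; [rewrite mulgV|apply: funext=> t; rewrite conjgK addbb]. Qed.

HB.instance Definition _ := isGroup.Build HT htmulA htmul1 htmulg1 htmulV htmulgV.
End Cocyc.


Local Open Scope group_scope.

Lemma conj_eq (G : groupType) (t y c : G) : (t ^ y == c) = (t == c ^ y^-1).
Proof. by apply/eqP/eqP => [<-|->]; [rewrite conjgK | rewrite conjgKV]. Qed.

Lemma htmulE (G : groupType) (x y : HT G) : x * y = htmul x y.
Proof. by []. Qed.

Section Dih.
Variables (G : groupType) (a b : G).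
Hypotheses (ha : a * a = 1) (hb : b * b = 1).

Definition gg (c : G) : HT G := MkHT c (fun t => t == c).

Lemma aV : a^-1 = a. Proof. exact: mulg1_eq. Qed.
Lemma bV : b^-1 = b. Proof. exact: mulg1_eq. Qed.

Lemma a_x : a * (a * b)^-1 = (a * b) * a.
Proof. by rewrite invgM aV bV !mulgA. Qed.

Lemma a_xk k : a * ((a * b) ^+ k)^-1 = (a * b) ^+ k * a.
Proof.
elim: k => [|k IH]; first by rewrite expg0 invg1 mulg1 mul1g.
by rewrite expgSr invgM mulgA a_x -mulgA IH mulgA -expgS -expgSr.
Qed.

Lemma C1 k : a ^ ((a * b) ^+ k)^-1 = (a * b) ^+ k.*2 * a.
Proof. by rewrite conjgE invgK a_xk mulgA -expgnDr addnn. Qed.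

Lemma C2 k : b ^ ((a * b) ^+ k * a)^-1 = (a * b) ^+ (k.*2.+1) * a.
Proof.
rewrite conjgE invgK invgM aV a_xk !mulgA -(mulgA _ a b) -expgSr -expgnDr.
by rewrite addSn addnn.
Qed.

Lemma gg_pow k : (gg a * gg b) ^+ k =
  MkHT ((a * b) ^+ k) (fun t => odd (count (fun j => t == (a * b) ^+ j * a) (iota 0 k.*2))).
Proof.
elim: k => [|k IH]; first by [].
rewrite expgSr IH !htmulE /htmul; congr MkHT; first by rewrite expgSr.
apply: funext => t.
rewrite doubleS -addn2 iotaD count_cat add0n /= !oddD !oddb addbF.
by rewrite conj_eq C1 -conjgM conj_eq C2.
Qed.

Lemma gg_rel n : (a * b) ^+ n = 1 -> (gg a * gg b) ^+ n = 1.
Proof.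
move=> hn; rewrite gg_pow hn; rewrite -[RHS]/(htone G) /htone; congr MkHT.
apply: funext => t; rewrite -addnn iotaD count_cat add0n (_ : iota n n = map (addn n) (iota 0 n)) ?count_map; last by rewrite -iotaDl addn0.
rewrite (@eq_count _ (preim (addn n) (fun j => t == (a * b) ^+ j * a)) (fun j => t == (a * b) ^+ j * a)); first by rewrite addnn odd_double.
by move=> j /=; rewrite expgnDr hn mul1g.
Qed.
End Dih.


Import GRing.Theory Num.Theory.

Section Geo.
Variables (S : finType) (m : S -> S -> option nat).
Hypothesis Hm : coxeter_matrix m.

Local Open Scope ring_scope.

Definition zeta (n : nat) : algC :=
  let: exist z _ := C_prim_root_exists (ltn0Sn (n.*2).-1) in z.

Lemma zeta_prim n : (0 < n)%N -> (n.*2).-primitive_root (zeta n).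
Proof.
rewrite /zeta; case: (C_prim_root_exists _) => z hz n0.
by rewrite prednK // in hz; rewrite double_gt0.
Qed.

Definition kappa n : algC := - (zeta n + (zeta n)^-1).

Definition Amat (a c : S) : algC :=
  if a == c then 2 else if m a c is Some n then kappa n else -2.

Lemma Amat_sym a c : Amat a c = Amat c a.
Proof. by rewrite /Amat eq_sym (proj1 (proj2 (Hm a c))). Qed.

Local Notation V := {ffun S -> algC}.
Definition sc (k : algC) (v : V) : V := [ffun c => k * v c].
Local Notation "k `* v" := (sc k v) (at level 40).
Definition ev (a : S) : V := [ffun c => (c == a)%:R].
Definition phiL (a : S) (v : V) : algC := \sum_c Amat a c * v c.
Definition sig (a : S) (v : V) : V := v - phiL a v `* ev a.

Lemma phiL_lin a k (u v : V) : phiL a (k `* u + v) = k * phiL a u + phiL a v.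
Proof.
rewrite /phiL mulr_sumr -big_split /=; apply: eq_bigr => c _.
by rewrite !ffunE; ring.
Qed.

Lemma phiL_e a c : phiL a (ev c) = Amat a c.
Proof.
rewrite /phiL (bigD1 c) //= big1 ?ffunE ?eqxx ?mulr1 ?addr0 //.
by move=> d hd; rewrite ffunE (negbTE hd) mulr0.
Qed.

Lemma phiL_sub a (v : V) k c : phiL a (v - k `* ev c) = phiL a v - k * Amat a c.
Proof.
have -> : v - k `* ev c = (- k) `* ev c + v by apply/ffunP => d; rewrite !ffunE; ring.
by rewrite phiL_lin phiL_e; ring.
Qed.

Lemma sig_lin a k (u v : V) : sig a (k `* u + v) = k `* sig a u + sig a v.
Proof.
by apply/ffunP => c; rewrite /sig phiL_lin !ffunE; ring.
Qed.

Lemma Amat_aa a : Amat a a = 2.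
Proof. by rewrite /Amat eqxx. Qed.

Lemma sigK a : cancel (sig a) (sig a).
Proof.
move=> v; rewrite {1}/sig phiL_sub Amat_aa; apply/ffunP => c.
by rewrite /sig !ffunE; ring.
Qed.

Lemma sig0 a : sig a 0 = 0.
Proof.
apply/ffunP => c; rewrite /sig /phiL !ffunE big1 => [|d _]; first ring.
by rewrite ffunE mulr0.
Qed.

Lemma sig_e a c : sig a (ev c) = ev c - Amat a c `* ev a.
Proof. by rewrite /sig phiL_e. Qed.

Lemma geom_sum (z : algC) n : z ^+ n = 1 -> z != 1 -> \sum_(0 <= j < n) z ^+ j = 0.
Proof.
move=> zn z1; have h : (z - 1) * \sum_(0 <= j < n) z ^+ j = 0; last first.
  by move/eqP: h; rewrite mulf_eq0 subr_eq0 (negbTE z1) /= => /eqP.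
rewrite mulr_sumr.
rewrite (eq_bigr (fun j => z ^+ j.+1 - z ^+ j)); last by move=> j _; rewrite exprS; ring.
by rewrite telescope_sumr // zn expr0 subrr.
Qed.

Lemma sig_sig a b w : sig a (sig b w) =
  [ffun c => w c - phiL b w * (c == b)%:R - (phiL a w - phiL b w * Amat a b) * (c == a)%:R].
Proof. by apply/ffunP => c; rewrite {1}/sig /sig phiL_sub !ffunE; ring. Qed.

Section Pair.
Variables (a b : S) (alpha : algC).
Hypothesis hab : Amat a b = alpha.
Hypothesis hba : Amat b a = alpha.

Definition M (v : V) := sig a (sig b v).

Lemma M_lin k u v : M (k `* u + v) = k `* M u + M v.
Proof. by rewrite /M !sig_lin. Qed.

Lemma M0 : M 0 = 0.
Proof. by rewrite /M !sig0. Qed.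

Lemma Mit_lin j k u v : iter j M (k `* u + v) = k `* iter j M u + iter j M v.
Proof. by elim: j => [|j IH] //=; rewrite IH M_lin. Qed.

Lemma Mit0 j : iter j M 0 = 0.
Proof. by elim: j => [|j IH] //=; rewrite IH M0. Qed.

Definition P (x y : algC) : V := x `* ev a + y `* ev b.

Lemma M_expand v : M v =
  [ffun c => v c - phiL b v * (c == b)%:R - (phiL a v - phiL b v * alpha) * (c == a)%:R].
Proof. by apply/ffunP => c; rewrite /M {1}/sig /sig phiL_sub hab !ffunE; ring. Qed.

Lemma phiL_P c x y : phiL c (P x y) = x * Amat c a + y * Amat c b.
Proof. by rewrite /P phiL_lin -[y `* ev b]addr0 phiL_lin !phiL_e /phiL big1 ?addr0 // => d _; rewrite ffunE mulr0. Qed.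

Lemma M_P x y : M (P x y) = P ((alpha ^+ 2 - 1) * x + alpha * y) (- alpha * x - y).
Proof.
rewrite M_expand !phiL_P hab hba !Amat_aa.
by apply/ffunP => c; rewrite /P !ffunE; ring.
Qed.

Definition T (n : nat) (u : V) : V := \sum_(0 <= j < n) iter j M u.

Lemma T_lin n k u v : T n (k `* u + v) = k `* T n u + T n v.
Proof.
apply/ffunP => c; rewrite /T !ffunE !sum_ffunE mulr_sumr -big_split /=.
by apply: eq_bigr => j _; rewrite Mit_lin !ffunE.
Qed.

Lemma T_eig n (w : V) (z : algC) : M w = z `* w -> \sum_(0 <= j < n) z ^+ j = 0 -> T n w = 0.
Proof.
move=> hw hz; have E j : iter j M w = z ^+ j `* w.
  elim: j => [|j IH] /=; first by apply/ffunP => c; rewrite ffunE expr0 mul1r.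
  by rewrite IH -[_ `* w]addr0 M_lin M0 addr0 hw; apply/ffunP => c; rewrite !ffunE exprS; ring.
apply/ffunP => c; rewrite /T sum_ffunE ffunE.
rewrite (eq_bigr (fun j => z ^+ j * w c)); last by move=> j _; rewrite E ffunE.
by rewrite -mulr_suml hz mul0r.
Qed.

Lemma T_P n (lam : algC) x y :
  lam != lam^-1 -> lam ^+ n = 1 -> lam != 1 -> lam^-1 != 1 ->
  alpha ^+ 2 - 2 = lam + lam^-1 -> lam != 0 -> T n (P x y) = 0.
Proof.
move=> hne hn h1 h1' ha h0; set u := P x y.
have Q : M (M u) = (alpha ^+ 2 - 2) `* M u + (-1) `* u.
  by rewrite /u !M_P; apply/ffunP => c; rewrite /P !ffunE; ring.
have E1 : T n ((- lam^-1) `* u + M u) = 0.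
  apply: (T_eig (z := lam)); last by apply: geom_sum.
  rewrite M_lin Q ha; apply/ffunP => c; rewrite !ffunE; by field.
have E2 : T n ((- lam) `* u + M u) = 0.
  apply: (T_eig (z := lam^-1)); last by apply: geom_sum => //; rewrite exprVn hn invr1.
  by rewrite M_lin Q ha; apply/ffunP => c; rewrite !ffunE; field.
rewrite T_lin in E1; rewrite T_lin in E2; apply/ffunP => c.
have : (lam - lam^-1) * T n u c = 0.
  transitivity (((- lam^-1) `* T n u + T n (M u)) c - ((- lam) `* T n u + T n (M u)) c).
    by rewrite !ffunE; ring.
  by rewrite E1 E2 subrr.
rewrite (_ : (0 : V) c = 0); last by rewrite ffunE.
by move/eqP; rewrite mulf_eq0 subr_eq0 (negbTE hne) /= => /eqP.
Qed.

Lemma M_fix n : (forall x y, T n (P x y) = 0) -> forall v, iter n M v = v.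
Proof.
move=> hT v.
have hP : (-1) `* v + M v = P (- (phiL a v - phiL b v * alpha)) (- phiL b v).
  by rewrite M_expand; apply/ffunP => c; rewrite /P !ffunE; ring.
have := hT (- (phiL a v - phiL b v * alpha)) (- phiL b v).
rewrite -hP T_lin /T.
have -> : \sum_(0 <= j < n) iter j M (M v) = \sum_(0 <= j < n) iter j.+1 M v.
  by apply: eq_bigr => j _; rewrite iterSr.
move=> h.
have tel : \sum_(0 <= k < n) (iter k.+1 M v - iter k M v) = iter n M v - v :=
  @telescope_sumr _ 0 n (fun k => iter k M v) (leq0n n).
apply/eqP; rewrite -subr_eq0 -tel sumrB; apply/eqP; rewrite -[RHS]h; apply/ffunP => c.
by rewrite !ffunE !sum_ffunE; ring.
Qed.

Lemma M2 : alpha = 0 -> forall v, M (M v) = v.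
Proof.
move=> a0 v.
have C w : sig a (sig b w) = sig b (sig a w).
  rewrite !sig_sig hab hba a0.
  by apply/ffunP => c; rewrite !ffunE; ring.
by rewrite /M C !sigK.
Qed.
End Pair.

Lemma kappa2 : kappa 2 = 0.
Proof.
have hz := zeta_prim (isT : (0 < 2)%N); set z := zeta 2 in hz *.
have z0 : z != 0 by rewrite (prim_root_eq0 hz).
have z4 : z ^+ 4 = 1 by apply: (prim_expr_order hz).
have z2 : z ^+ 2 != 1 by rewrite -(prim_order_dvd hz).
have : (z ^+ 2 - 1) * (z ^+ 2 + 1) = 0 by rewrite -subr_sqr -exprM z4 expr1n subrr.
move/eqP; rewrite mulf_eq0 subr_eq0 (negbTE z2) /= => /eqP e.
have : z + z^-1 = (z ^+ 2 + 1) / z by field.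
by rewrite e mul0r /kappa => ->; rewrite oppr0.
Qed.

Lemma iter_rel a b n : m a b = Some n -> forall v, iter n (M a b) v = v.
Proof.
move=> e v; have [ab|ab] := eqVneq a b.
  subst b; have : m a a = Some 1%N by apply: (proj2 (proj1 (Hm a a))).
  by rewrite e => -[->] /=; rewrite /M sigK.
have n1 : n <> 1%N by move=> n1; move/eqP: ab; apply; apply: (proj1 (proj1 (Hm a b))); rewrite e n1.
have n0 : n <> 0%N by move=> n0; apply: (proj2 (proj2 (Hm a b))); rewrite e n0.
have hab : Amat a b = kappa n by rewrite /Amat (negbTE ab) e.
have hba : Amat b a = kappa n by rewrite Amat_sym.
have [n2|n2] := eqVneq n 2%N.
  by subst n; apply: (M2 hab hba kappa2).
have n3 : (2 < n)%N by case: n n1 n0 n2 {e hab hba} => [|[|[|n]]].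
have hz := zeta_prim (ltnW (ltnW n3) : (0 < n)%N); set z := zeta n in hz hab hba.
have z0 : z != 0 by rewrite (prim_root_eq0 hz) -lt0n double_gt0 (ltnW (ltnW n3)).
set lam := z ^+ 2.
have l0 : lam != 0 by rewrite expf_neq0.
have ln : lam ^+ n = 1 by rewrite -exprM mul2n (prim_expr_order hz).
have l1 : lam != 1.
  rewrite -(prim_order_dvd hz); apply/negP => /dvdn_leq.
  by move=> /(_ isT); rewrite -addnn; lia.
have l1' : lam^-1 != 1 by rewrite invr_eq1.
have lne : lam != lam^-1.
  apply/negP => /eqP e2.
  have : z ^+ 4 == 1 by rewrite (exprM z 2 2) -/lam expr2 {1}e2 mulVf.
  rewrite -(prim_order_dvd hz) => /dvdn_leq.
  by move=> /(_ isT); rewrite -addnn; lia.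
apply: (M_fix hab) => x y; apply: (T_P hab hba _ _ lne) => //.
rewrite /kappa /lam -/z; by field.
Qed.

End Geo.

Section BijGroup.
Variable (T : Type).
Record Bij := MkBij { bf : T -> T; bb : T -> T; bK : cancel bf bb; bKV : cancel bb bf }.
HB.instance Definition _ := gen_eqMixin Bij.
HB.instance Definition _ := gen_choiceMixin Bij.

Lemma bij_eq (x y : Bij) : bf x = bf y -> x = y.
Proof.
case: x y => f g K KV [f' g' K' KV'] /= e; subst f'.
have eg : g = g' by apply: funext => v; rewrite -{1}(KV' v) K.
subst g'; congr MkBij; apply: Prop_irrelevance.
Qed.

Definition bmul (x y : Bij) : Bij.
  refine (@MkBij (bf x \o bf y) (bb y \o bb x) _ _).
  - by move=> v /=; rewrite !bK.
  - by move=> v /=; rewrite !bKV.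
Defined.
Definition bone : Bij := @MkBij (@id T) id (fun _ => erefl) (fun _ => erefl).
Definition binv (x : Bij) : Bij := MkBij (@bKV x) (@bK x).

Lemma bmulA : associative bmul. Proof. by move=> x y z; apply: bij_eq. Qed.
Lemma bmul1 : left_id bone bmul. Proof. by move=> x; apply: bij_eq. Qed.
Lemma bmulg1 : right_id bone bmul. Proof. by move=> x; apply: bij_eq. Qed.
Lemma bmulV : left_inverse bone binv bmul.
Proof. by move=> x; apply: bij_eq; apply: funext => v /=; rewrite bK. Qed.
Lemma bmulgV : right_inverse bone binv bmul.
Proof. by move=> x; apply: bij_eq; apply: funext => v /=; rewrite bKV. Qed.

HB.instance Definition _ := isGroup.Build Bij bmulA bmul1 bmulg1 bmulV bmulgV.

Lemma bf_exp (x : Bij) n : bf (x ^+ n)%g = iter n (bf x).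
Proof.
elim: n => [|n IH] //; rewrite expgS; apply: funext => v /=.
by rewrite -/(bmul _ _) /= IH.
Qed.
End BijGroup.

Lemma geo_sep (S : finType) (m : S -> S -> option nat) : coxeter_matrix m ->
  exists (H : groupType) (f : S -> H), coxeter_rels f m /\ injective f.
Proof.
move=> Hm.
pose f a : Bij {ffun S -> algC} := MkBij (@sigK S m a) (@sigK S m a).
exists (Bij {ffun S -> algC}), f; split.
  move=> a b n e; apply: bij_eq; rewrite bf_exp; apply: funext => v.
  exact: (iter_rel Hm e).
move=> a b e; case: (eqVneq a b) => // ab.
have := congr1 (fun x => bf x (ev a) a) e => /=.
rewrite !sig_e !ffunE eqxx (negbTE ab) Amat_aa /=.
rewrite !mulr1 !mulr0 => h.
have : (2 : algC)%R = 0%R.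
  apply: oppr_inj; apply: (addrI 1%R). exact: h.
by move/eqP; rewrite pnatr_eq0.
Qed.

Local Open Scope group_scope.


Local Open Scope group_scope.

Section Cox.
Variables (W : groupType) (S : finType) (r : S -> W) (m : S -> S -> option nat).
Hypothesis Hm : coxeter_matrix m.
Hypothesis Hrel : coxeter_rels r m.
Hypothesis Hgen : forall w : W, exists ws : seq S, wprod r ws = w.
Hypothesis Huniv : forall (H : groupType) (f : S -> H), coxeter_rels f m ->
  exists phi : W -> H, (forall x y, phi (x * y) = phi x * phi y) /\ (forall s, phi (r s) = f s).

Local Notation wp := (wprod r).
Local Notation l := (clen r).

Lemma hom1 (G H : groupType) (phi : G -> H) :
  (forall x y, phi (x * y) = phi x * phi y) -> phi 1 = 1.
Proof. by move=> phiM; apply: (mulgI (phi 1)); rewrite -phiM !mulg1. Qed.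

Lemma rr s : r s * r s = 1.
Proof. by have := Hrel (proj2 (proj1 (Hm s s)) erefl); rewrite expg1. Qed.

Lemma rV s : (r s)^-1 = r s.
Proof. by apply: mulg1_eq; apply: rr. Qed.

Lemma wprod_cat a b : wp (a ++ b) = wp a * wp b.
Proof. by elim: a => [|s a IH] /=; rewrite ?mul1g // IH mulgA. Qed.

Lemma wprod_rcons ws s : wp (rcons ws s) = wp ws * r s.
Proof. by rewrite -cats1 wprod_cat /= mulg1. Qed.

Lemma wprod_rev ws : wp (rev ws) = (wp ws)^-1.
Proof.
elim: ws => [|s ws IH] /=; first by rewrite invg1.
by rewrite rev_cons wprod_rcons IH invgM rV.
Qed.

Lemma clen_min ws : (l (wp ws) <= size ws)%N.
Proof.
rewrite /clen; case: pselect => [h|nh]; last by [].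
case: ex_minnP => n _ hmin; apply: hmin; apply/asboolP; by exists ws.
Qed.

Lemma clen_spec w : exists ws, size ws = l w /\ wp ws = w.
Proof.
rewrite /clen; case: pselect => [h|nh]; last first.
  by case: nh; have [ws hws] := Hgen w; exists (size ws); apply/asboolP; exists ws.
by case: ex_minnP => n /asboolP [ws [h1 h2]] _; exists ws.
Qed.

Lemma clen1 : l 1 = 0%N.
Proof. by apply/eqP; rewrite -leqn0; apply: (clen_min [::]). Qed.

Lemma clen_eq0 w : l w = 0%N -> w = 1.
Proof. by move=> h; have [[|s ws] [hs <-]] := clen_spec w; rewrite // h in hs. Qed.

Lemma clenM x y : (l (x * y) <= l x + l y)%N.
Proof.
have [xs [hx ex]] := clen_spec x; have [ys [hy ey]] := clen_spec y.
by rewrite -hx -hy -{1}ex -{1}ey -size_cat -wprod_cat clen_min.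
Qed.

Lemma clenV w : l w^-1 = l w.
Proof.
have H x : (l x^-1 <= l x)%N.
  by have [xs [hx ex]] := clen_spec x; rewrite -hx -{1}ex -wprod_rev -(size_rev xs) clen_min.
by apply/eqP; rewrite eqn_leq H /= -{1}(invgK w) H.
Qed.

Lemma clen_r s : (l (r s) <= 1)%N.
Proof. by have := clen_min [:: s]; rewrite /= mulg1. Qed.

Lemma clen_rsS w s : (l (w * r s) <= (l w).+1)%N.
Proof. by apply: leq_trans (clenM _ _) _; rewrite -addn1 leq_add2l clen_r. Qed.

Lemma clen_rsP w s : (l w <= (l (w * r s)).+1)%N.
Proof. by rewrite -{1}(mulg1 w) -(rr s) mulgA clen_rsS. Qed.

Lemma par_rels : coxeter_rels (fun _ : S => (true : par)) m.
Proof. by move=> s t n _; rewrite expg1n. Qed.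

Lemma clen_odd w s : odd (l (w * r s)) = ~~ odd (l w).
Proof.
have [eps [epsM epsr]] := Huniv par_rels.
have E ws : eps (wp ws) = odd (size ws).
  elim: ws => [|t ws IH] /=; first exact: hom1.
  by rewrite epsM IH epsr.
have O x : odd (l x) = eps x by have [xs [hx ex]] := clen_spec x; rewrite -ex E hx ex.
by rewrite !O epsM epsr; exact: addbT.
Qed.

Lemma clen_rs w s : l (w * r s) = (l w).+1 \/ (l (w * r s)).+1 = l w.
Proof.
have h1 := clen_rsS w s; have h2 := clen_rsP w s; have h3 := clen_odd w s.
case: (ltngtP (l (w * r s)) (l w)) => h.
- by right; apply/eqP; rewrite eqn_leq h h2.
- by left; apply/eqP; rewrite eqn_leq h h1.
- by move: h3; rewrite h; case: (odd _).
Qed.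


Definition gs (s : S) : HT W := gg (r s).

Lemma gs_rels : coxeter_rels gs m.
Proof. by move=> a b n hab; apply: gg_rel; [apply: rr|apply: rr|apply: Hrel]. Qed.

Section Phi.
Variable phi : W -> HT W.
Hypothesis phiM : forall x y, phi (x * y) = phi x * phi y.
Hypothesis phir : forall s, phi (r s) = gs s.

Lemma phi_hw w : hw (phi w) = w.
Proof.
have [ws <-] := Hgen w; elim: ws => [|s ws IH] /=; first by rewrite (hom1 phiM).
by rewrite phiM phir htmulE /= IH.
Qed.

Definition N w t := hf (phi w) t.

Lemma NM x y t : N (x * y) t = N x t (+) N y (t ^ x).
Proof. by rewrite /N phiM htmulE /= phi_hw. Qed.

Lemma Nr s t : N (r s) t = (t == r s).
Proof. by rewrite /N phir. Qed.

Lemma N1 t : N 1 t = false.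
Proof. by rewrite /N (hom1 phiM). Qed.

Lemma del_exch ws t : N (wp ws) t -> exists2 i, (i < size ws)%N & t * wp ws = wp (del i ws).
Proof.
elim: ws t => [|s ws IH] t /=; first by rewrite N1.
rewrite NM Nr; case: eqP => [->|_] /=.
  by move=> _; exists 0%N => //; rewrite /del /= drop0 mulgA rr mul1g.
move/IH => [i hi e]; exists i.+1 => //.
by rewrite /del /= -/(del i ws) -e conjgE rV !mulgA rr mul1g.
Qed.

Lemma exch_phi ws s : (l (wp ws * r s) < l (wp ws))%N ->
  exists2 i, (i < size ws)%N & wp ws * r s = wp (del i ws).
Proof.
set w := wp ws => hl; set t0 := r s ^ w^-1.
have E : t0 * w = w * r s by rewrite /t0 conjgE invgK -!mulgA mulVg mulg1.
case Nt: (N w t0); first by have [i hi e] := del_exch Nt; exists i => //; rewrite -E.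
have [vs [hv ev]] := clen_spec (w * r s).
have : N (wp vs) t0 by rewrite ev NM Nt Nr /= /t0 conjgKV.
move=> /del_exch [i hi e]; move: e; rewrite ev mulgA E -mulgA rr mulg1 => e.
have := clen_min (del i vs); rewrite -e size_del // hv => h.
have : (l w <= l (w * r s))%N by apply: leq_trans h (leq_pred _).
by rewrite leqNgt hl.
Qed.
End Phi.

Lemma exch ws s : (l (wp ws * r s) < l (wp ws))%N ->
  exists2 i, (i < size ws)%N & wp ws * r s = wp (del i ws).
Proof. by have [phi [phiM phir]] := Huniv gs_rels; apply: exch_phi. Qed.

Lemma reduce ws : exists vs, [/\ subseq vs ws, wp vs = wp ws & size vs = l (wp ws)].
Proof.
elim/last_ind: ws => [|ws s [vs [sub e sz]]]; first by exists [::]; rewrite /= clen1.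
rewrite wprod_rcons; case: (clen_rs (wp ws) s) => h.
  exists (rcons vs s); split; first by rewrite -!cats1 cat_subseq.
    by rewrite wprod_rcons e.
  by rewrite size_rcons sz h.
have [i hi e2] : exists2 i, (i < size vs)%N & wp vs * r s = wp (del i vs).
  by apply: exch; rewrite e -h.
exists (del i vs); split.
- exact: subseq_trans (subseq_del i vs) (subseq_trans sub (subseq_rcons ws s)).
- by rewrite -e2 e.
- by rewrite size_del // sz -h.
Qed.

Lemma r_inj : injective r.
Proof.
have [H [f [hf finj]]] := geo_sep Hm; have [phi [phiM phir]] := Huniv hf.
by move=> a b e; apply: finj; rewrite -!phir e.
Qed.

Local Notation par := (in_parabolic r).
Implicit Types (K L : {set S}).

Lemma par1 K : par K 1.
Proof. by exists [::]. Qed.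

Lemma parM K x y : par K x -> par K y -> par K (x * y).
Proof.
move=> [xs [hx <-]] [ys [hy <-]]; exists (xs ++ ys).
by rewrite all_cat hx hy wprod_cat.
Qed.

Lemma parV K x : par K x -> par K x^-1.
Proof. by move=> [xs [hx <-]]; exists (rev xs); rewrite all_rev hx wprod_rev. Qed.

Lemma par_r K s : s \in K -> par K (r s).
Proof. by move=> hs; exists [:: s]; rewrite /= hs mulg1. Qed.

Lemma par_subset K L x : K \subset L -> par K x -> par L x.
Proof.
move=> /subsetP KL [xs [hx <-]]; exists xs; split => //.
by apply/allP => s hs; apply: KL; apply: (allP hx).
Qed.

Lemma all_subseq_ (T : eqType) (a : pred T) (s1 s2 : seq T) :
  subseq s1 s2 -> all a s2 -> all a s1.
Proof. by move=> sub h; apply/allP => x hx; apply: (allP h); apply: (mem_subseq sub). Qed.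

Lemma par_red_word K w : par K w -> exists vs, [/\ all (mem K) vs, wp vs = w & size vs = l w].
Proof.
move=> [ws [hw <-]]; have [vs [sub e sz]] := reduce ws.
by exists vs; split => //; apply: all_subseq_ sub hw.
Qed.

Lemma clen_r1 s : l (r s) = 1%N.
Proof.
have := clen_odd 1 s; rewrite mul1g clen1 /= => h.
by have := clen_r s; case: (l (r s)) h => [|[|]].
Qed.

Lemma r_in_par K s : par K (r s) -> s \in K.
Proof.
move=> /par_red_word [vs [hv e sz]]; rewrite clen_r1 in sz.
case: vs hv e sz => [|t [|t' vs]] //= hv e _.
by move: e hv; rewrite mulg1 => /r_inj ->; rewrite andbT.
Qed.

Lemma size_rcons_clen ws s :
  size (rcons ws s) = l (wp (rcons ws s)) -> size ws = l (wp ws).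
Proof.
rewrite size_rcons wprod_rcons => h; apply/eqP; rewrite eqn_leq clen_min /=.
by rewrite -ltnS h clen_rsS.
Qed.

Lemma par_red K w : par K w -> forall ws, size ws = l (wp ws) -> wp ws = w -> all (mem K) ws.
Proof.
move=> hK ws; elim/last_ind: ws w hK => [|ws s IH] w hK // hsz e.
have hsz0 := size_rcons_clen hsz.
have hl : (l (w * r s) < l w)%N.
  by rewrite -e wprod_rcons -mulgA rr mulg1 -hsz0 -(wprod_rcons) -hsz size_rcons.
have [vs [hv ev sv]] := par_red_word hK.
have [i hi ei] : exists2 i, (i < size vs)%N & wp vs * r s = wp (del i vs).
  by apply: exch; rewrite ev.
have hw0 : par K (wp ws).
  have -> : wp ws = w * r s by rewrite -e wprod_rcons -mulgA rr mulg1.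
  by rewrite -ev ei; exists (del i vs); split => //; apply: all_subseq_ (subseq_del i vs) hv.
have := IH _ hw0 hsz0 erefl => hall.
have hs : s \in K.
  apply: r_in_par; have -> : r s = (wp ws)^-1 * w by rewrite -e wprod_rcons mulKg.
  by apply: parM => //; apply: parV.
by rewrite all_rcons hall andbT; exact: hs.
Qed.

Lemma suppP w s : reflect (exists ws, [/\ reduced r ws, wp ws = w & s \in ws]) (s \in supp r w).
Proof. by rewrite inE; apply: (iffP (asboolP _)). Qed.

Lemma par_supp K w : par K w <-> supp r w \subset K.
Proof.
split.
  move=> h; apply/subsetP => s /suppP [ws [red e hs]].
  by have := par_red h red e => /allP /(_ s hs).
move=> /subsetP h; have [ws [hs e]] := clen_spec w; exists ws; split => //.
apply/allP => s hin; apply: h; apply/suppP; exists ws; split => //.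
by rewrite /reduced e hs.
Qed.

Lemma par_supp_self w : par (supp r w) w.
Proof. by apply/par_supp. Qed.

Lemma del_cat (T : Type) i (xs ys : seq T) :
  del i (xs ++ ys) = if (i < size xs)%N then del i xs ++ ys else xs ++ del (i - size xs) ys.
Proof.
elim: xs i => [|x xs IH] i; first by rewrite /= subn0.
case: i => [|i]; first by rewrite /del /= !drop0.
rewrite /del /= -/(del i (xs ++ ys)) IH ltnS subSS.
by case: ifP.
Qed.

Lemma last_letter K y : par K y -> y != 1 ->
  exists y1 s, [/\ s \in K, par K y1, y = y1 * r s & l y = (l y1).+1].
Proof.
move=> hy y1n; have [ys [hs e]] := clen_spec y.
have hall := par_red hy (etrans hs (congr1 _ (esym e))) e.
case/lastP: ys hs e hall => [|ys s] hs e hall; first by rewrite -e eqxx in y1n.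
move: hall; rewrite all_rcons => /andP [hsK hall].
have hsz : size (rcons ys s) = l (wp (rcons ys s)) by rewrite e.
have h0 := size_rcons_clen hsz.
exists (wp ys), s; split => //; first by exists ys.
  by rewrite -e wprod_rcons.
by rewrite -hs size_rcons h0.
Qed.

Lemma min_rep K w : exists x y, [/\ par K y, w = x * y &
  forall z, par K z -> l (x * z) = (l x + l z)%N].
Proof.
pose P n := `[< exists x, l x = n /\ exists y, par K y /\ w = x * y >].
have exP : exists n, P n by exists (l w); apply/asboolP; exists w; split=> //; exists 1; split; [exact: par1 | rewrite mulg1].
case: (ex_minnP exP) => n /asboolP [x [hx [y [hy e]]]] hmin.
exists x, y; split => //.
suff H k : forall z, l z = k -> par K z -> l (x * z) = (l x + k)%N by move=> z hz; apply: H.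
elim: k => [|k IH] z hz hzK.
  by rewrite (clen_eq0 hz) mulg1 addn0.
have z1 : z != 1 by apply/eqP => z1; rewrite z1 clen1 in hz.
have [z' [s [hsK hz'K ez hl]]] := last_letter hzK z1.
rewrite hz in hl; case: hl => hl.
have IHz := IH z' (esym hl) hz'K.
have [h|h] := clen_rs (x * z') s.
  by rewrite ez mulgA h IHz addnS.
exfalso.
have [xs [hxs exs]] := clen_spec x; have [zs [hzs ezs]] := clen_spec z'.
have hlt : (l (wp (xs ++ zs) * r s) < l (wp (xs ++ zs)))%N by rewrite wprod_cat exs ezs -h.
have [i hi ei] := exch hlt.
move: ei; rewrite del_cat wprod_cat exs ezs; case: ifP => hi2 ei.
- have hx' : (l (wp (del i xs)) < l x)%N.
    apply: leq_ltn_trans (clen_min _) _; rewrite size_del // hxs prednK //.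
    by rewrite -hxs; apply: leq_ltn_trans hi2.
  have : (n <= l (wp (del i xs)))%N.
    apply: hmin; apply/asboolP; exists (wp (del i xs)); split => //.
    exists (z' * r s * z'^-1 * y); split.
      by apply: parM => //; apply: parM; [apply: parM => //; exact: par_r | exact: parV].
    rewrite wprod_cat ezs in ei.
    by rewrite e !mulgA -ei -[x * z' * r s * r s]mulgA rr mulg1 mulgK.
  by rewrite -hx leqNgt hx'.
- have ez' : z' * r s = wp (del (i - size xs) zs).
    by move: ei; rewrite wprod_cat exs -mulgA => /mulgI.
  have := clen_min (del (i - size xs) zs); rewrite -ez' -ez hz size_del.
    by rewrite hzs -hl /= ltnNge leq_pred.
  by move/negbT: hi2; rewrite -leqNgt => hi2; move: hi; rewrite size_cat => hi; lia.
Qed.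

Local Notation inX := (in_X r).

Lemma X_add K x : inX K x -> forall z, par K z -> l (x * z) = (l x + l z)%N.
Proof.
move=> hX; have [x0 [y0 [hy0 e hadd]]] := min_rep K x.
have [y1|y1] := eqVneq y0 1; first by rewrite e y1 mulg1.
have [y2 [s [hsK hy2 ey0 hl]]] := last_letter hy0 y1.
have E1 : x * r s = x0 * y2 by rewrite e ey0 -!mulgA rr mulg1.
have := hX s hsK; rewrite E1 e hadd // hadd // hl.
by rewrite addnS ltnNge leqnSn.
Qed.

Lemma X_unique K x x' y y' : inX K x -> inX K x' -> par K y -> par K y' ->
  x * y = x' * y' -> y = y'.
Proof.
move=> hx hx' hy hy' e.
have hd : par K (y * y'^-1) by apply: parM => //; apply: parV.
have ex' : x' = x * (y * y'^-1) by rewrite mulgA e mulgK.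
have ex : x = x' * (y * y'^-1)^-1 by rewrite ex' mulgK.
have h1 := X_add hx hd; rewrite -ex' in h1.
have h2 := X_add hx' (parV hd); rewrite -ex clenV in h2.
have : l (y * y'^-1) = 0%N by lia.
by move/clen_eq0/divg1_eq.
Qed.

Local Notation pr := (pright r).

Lemma pright_P K w : par K (pr K w) /\ inX K (w * (pr K w)^-1).
Proof.
rewrite /pright; case: pselect => [h|nh]; first exact: (projT2 (cid h)).
exfalso; apply: nh; have [x [y [hy e hadd]]] := min_rep K w.
exists y; split => //; rewrite e mulgK => s hs.
by rewrite hadd; [rewrite clen_r1 addn1 ltnSn | exact: par_r].
Qed.

Lemma pright_eq K w y : par K y -> inX K (w * y^-1) -> pr K w = y.
Proof.
move=> hy hX; have [hp hpX] := pright_P K w.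
by apply: (X_unique hpX hX hp hy); rewrite !mulgVK.
Qed.

Lemma inX1 K : inX K 1.
Proof. by move=> s _; rewrite mul1g clen1 clen_r1. Qed.

Lemma pright_par K w : par K w -> pr K w = w.
Proof. by move=> h; apply: pright_eq => //; rewrite mulgV; apply: inX1. Qed.

Lemma pright_sub K L w : L \subset K -> pr L (pr K w) = pr L w.
Proof.
move=> LK; have [hy hyX] := pright_P K w; have [hz hzX] := pright_P L (pr K w).
move: (pr K w) hy hyX hz hzX => y hy hyX hz hzX.
move: (pr L y) hz hzX => z hz hzX.
symmetry; apply: pright_eq => //.
have -> : w * z^-1 = (w * y^-1) * (y * z^-1) by rewrite !mulgA mulgVK.
have hyz : par K (y * z^-1) by apply: parM => //; apply: parV; apply: par_subset hz.
move=> s hs; rewrite -[w / y * (y / z) * r s]mulgA !(X_add hyX) ?ltn_add2l //; last first.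
  by apply: parM => //; apply: par_r; apply: (subsetP LK).
exact: hzX.
Qed.

Lemma supp_pright K w : supp r (pr K w) \subset K.
Proof. by apply/par_supp; case: (pright_P K w). Qed.

Lemma pright_supp_sub L x : supp r (pr L x) \subset supp r x.
Proof.
have [hp hX] := pright_P L x; move: (pr L x) hp hX => w hp hX.
have hl := X_add hX hp; rewrite mulgVK in hl.
apply/subsetP => s /suppP [ws [red e hs]].
have [ps [hps eps]] := clen_spec (x * w^-1).
apply/suppP; exists (ps ++ ws); split; last by rewrite mem_cat hs orbT.
  by rewrite /reduced wprod_cat eps e mulgVK size_cat hps red e hl.
by rewrite wprod_cat eps e mulgVK.
Qed.

Lemma notDes x s : (s \notin Des r x) = (l x < l (x * r s))%N.
Proof.
rewrite inE -leqNgt; case: (clen_rs x s) => h; first by rewrite h leqnSn ltnSn.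
by rewrite -h ltnn ltnNge leqnSn.
Qed.

Lemma cle_supp x y : cle r x y -> supp r x \subset supp r y.
Proof. by rewrite /cle => e; rewrite -{1}e pright_supp_sub. Qed.

Section Main.
Variables (u v : W).
Hypothesis Huv : cle r u v.

Local Notation I := (supp r u).
Local Notation J := (supp r v).
Local Notation inP := (in_PIJ I J).
Local Notation inI := (in_interval r u v).

Lemma prG_supp K : pr (supp r (pr K v)) v = pr K v.
Proof. by rewrite -(pright_sub _ (supp_pright K v)) pright_par //; exact: par_supp_self. Qed.

Lemma F_wd w : inI w -> inP (supp r w).
Proof. by case=> h1 h2; rewrite /in_PIJ (cle_supp h1) (cle_supp h2). Qed.

Lemma G_wd K : inP K -> inI (pr K v).
Proof.
case/andP => IK KJ; split; first by rewrite /cle pright_sub.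
exact: prG_supp.
Qed.

Lemma GF w : inI w -> pr (supp r w) v = w.
Proof. by case. Qed.

Lemma G_mono K L : K \subset L -> cle r (pr K v) (pr L v).
Proof.
move=> KL; rewrite /cle pright_sub ?prG_supp //.
exact: subset_trans (supp_pright K v) KL.
Qed.

Lemma pr_char K w : pr K v = w <-> supp r w \subset K /\ inX K (v * w^-1).
Proof.
split; first by move=> <-; split; [exact: supp_pright | case: (pright_P K v)].
by case=> h1 h2; apply: pright_eq => //; apply/par_supp.
Qed.

Lemma join_ex w g : inI w -> inI g ->
  is_join r u v w g (pr (supp r w :|: supp r g) v).
Proof.
move=> hw hg; have /andP [Iw wJ] := F_wd hw; have /andP [Ig gJ] := F_wd hg.
set K := supp r w :|: supp r g.
have hK : inP K by rewrite /in_PIJ (subset_trans Iw (subsetUl _ _)) subUset wJ gJ.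
split.
- exact: G_wd.
- by rewrite /cle pright_sub ?subsetUl // GF.
- by rewrite /cle pright_sub ?subsetUr // GF.
move=> y hy cwy cgy.
have Ky : K \subset supp r y by rewrite subUset (cle_supp cwy) (cle_supp cgy).
rewrite /cle {1}(esym (GF hy)) pright_sub ?prG_supp //.
exact: subset_trans (supp_pright K v) Ky.
Qed.

Theorem main_sec :
  let I := supp r u in
  let J := supp r v in
  let F := supp r in
  let G := fun K : {set S} => pright r K v in
  let inI := in_interval r u v in
  let inP := in_PIJ I J in
  (forall w, inI w -> inP (F w)) /\
  (forall K, inP K -> inI (G K)) /\
  (forall w, inI w -> G (F w) = w) /\
  (forall K, inP K -> F (G K) \subset K) /\
  (forall w g, inI w -> inI g -> F w = F g -> w = g) /\
  (forall w g, inI w -> inI g -> cle r w g -> F w \subset F g) /\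
  (forall w g, inI w -> inI g ->
     (exists x, is_join r u v w g x) /\
     (forall x, is_join r u v w g x -> F x = F w :|: F g)) /\
  (forall w, inI w -> exists K, inP K /\ G K = w) /\
  (forall K L, inP K -> inP L -> K \subset L -> cle r (G K) (G L)) /\
  (forall K L, inP K -> inP L -> is_meet r u v (G K) (G L) (G (K :&: L))) /\
  (forall w, inI w ->
     (forall K L, inP K -> inP L -> G K = w -> G L = w ->
        G (K :|: L) = w /\ G (K :&: L) = w) /\
     (inP (F w) /\ G (F w) = w /\ (forall K, inP K -> G K = w -> F w \subset K)) /\
     (let M := J :\: Des r (pleft r (F w) v) in
      inP M /\ G M = w /\ (forall K, inP K -> G K = w -> K \subset M))).
Proof.
move=> I0 J0 F G inI0 inP0.
split; first exact: F_wd.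
split; first exact: G_wd.
split; first exact: GF.
split; first by move=> K _; apply: supp_pright.
split; first by move=> w g hw hg e; rewrite -(GF hw) -(GF hg); congr pright; exact: e.
split; first by move=> w g _ _; apply: cle_supp.
split.
  move=> w g hw hg; split; first by eexists; apply: join_ex.
  move=> x [hx cwx cgx hmax]; apply/eqP; rewrite eqEsubset subUset (cle_supp cwx) (cle_supp cgx) andbT.
  have [hx0 cw0 cg0 _] := join_ex hw hg.
  rewrite andbT; apply: (subset_trans (cle_supp (hmax _ hx0 cw0 cg0))); exact: supp_pright.
split; first by move=> w hw; exists (supp r w); split; [exact: F_wd | exact: GF].
split; first by move=> K L _ _; apply: G_mono.
split.
  move=> K L /andP [IK KJ] /andP [IL LJ]; split.
  - apply: G_wd; rewrite /in_PIJ subsetI IK IL /=.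
    exact: subset_trans (subsetIl _ _) KJ.
  - exact: G_mono (subsetIl _ _).
  - exact: G_mono (subsetIr _ _).
  move=> y hy cyK cyL.
  have hK : supp r y \subset K := subset_trans (cle_supp cyK) (supp_pright K v).
  have hL : supp r y \subset L := subset_trans (cle_supp cyL) (supp_pright L v).
  by rewrite /cle /G pright_sub ?subsetI ?hK ?hL // GF.
move=> w hw; have /andP [Iw wJ] := F_wd hw.
split.
  move=> K L _ _ /pr_char [hK hXK] /pr_char [hL hXL]; split; apply/pr_char; split.
  - exact: subset_trans hK (subsetUl _ _).
  - by move=> s; rewrite inE => /orP [] hs; [apply: hXK | apply: hXL].
  - by rewrite subsetI hK hL.
  - by move=> s; rewrite inE => /andP [hs _]; apply: hXK.
split.
  split; first exact: F_wd.
  split; first exact: GF.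
  by move=> K _ <-; apply: supp_pright.
have hxX : inX (supp r w) (v * w^-1).
  by have [_ h] := pright_P (supp r w) v; rewrite (GF hw) in h.
have epl : pleft r (F w) v = v * w^-1 by rewrite /pleft /F (GF hw).
move=> M; rewrite /M epl.
have hXD K : inX K (v * w^-1) -> forall s, s \in K -> s \notin Des r (v * w^-1).
  by move=> hX s hs; rewrite notDes; apply: hX.
split.
  rewrite /inP0 /in_PIJ subsetDl andbT; apply/subsetP => s hs.
  rewrite in_setD (subsetP (subset_trans Iw wJ) _ hs) andbT.
  by apply: (hXD _ hxX); apply: (subsetP Iw).
split.
  apply/pr_char; split.
    apply/subsetP => s hs; rewrite in_setD (subsetP wJ _ hs) andbT.
    exact: (hXD _ hxX).
  by move=> s; rewrite in_setD => /andP [hs _]; rewrite -notDes.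
move=> K /andP [_ KJ] /pr_char [_ hXK]; apply/subsetP => s hs.
by rewrite in_setD (subsetP KJ _ hs) andbT (hXD _ hXK).
Qed.

End Main.

End Cox.

Theorem mainTheorem12 (W : groupType) (S : finType) (r : S -> W)
  (HC : coxeter_system r) (u v : W) (Huv : cle r u v) :
  let I := supp r u in
  let J := supp r v in
  let F := supp r in
  let G := fun K : {set S} => pright r K v in
  let inI := in_interval r u v in
  let inP := in_PIJ I J in
  (* F and G_v are well defined *)
  (forall w, inI w -> inP (F w)) /\
  (forall K, inP K -> inI (G K)) /\
  (* (a) *)
  (forall w, inI w -> G (F w) = w) /\
  (forall K, inP K -> F (G K) \subset K) /\
  (* (b) *)
  (forall w g, inI w -> inI g -> F w = F g -> w = g) /\
  (forall w g, inI w -> inI g -> cle r w g -> F w \subset F g) /\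
  (forall w g, inI w -> inI g ->
     (exists x, is_join r u v w g x) /\
     (forall x, is_join r u v w g x -> F x = F w :|: F g)) /\
  (* (c) *)
  (forall w, inI w -> exists K, inP K /\ G K = w) /\
  (forall K L, inP K -> inP L -> K \subset L -> cle r (G K) (G L)) /\
  (forall K L, inP K -> inP L -> is_meet r u v (G K) (G L) (G (K :&: L))) /\
  (* (d) *)
  (forall w, inI w ->
     (forall K L, inP K -> inP L -> G K = w -> G L = w ->
        G (K :|: L) = w /\ G (K :&: L) = w) /\
     (inP (F w) /\ G (F w) = w /\ (forall K, inP K -> G K = w -> F w \subset K)) /\
     (let M := J :\: Des r (pleft r (F w) v) in
      inP M /\ G M = w /\ (forall K, inP K -> G K = w -> K \subset M))).
Proof.
case: HC => m [Hm Hrel Hgen Huniv].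
exact: (main_sec Hm Hrel Hgen Huniv Huv).
Qed.
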